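(* Let $A$ be a finite abelian group of even order and $H$ a subgroup of $A$. If $H$ contains an element that is not a square in $A$, then $H$ is a subgroup perfect code of $A$.
   Context: $A$ is written additively with identity $0$. An element $x$ of $A$ is a square if $x=2y$ for some $y\in A$; a subset is square-free if it contains no squares. For a square-free $T\subseteq A$, the Cayley sum graph $\mathrm{CayS}(A,T)$ is the simple graph with vertex set $A$ in which distinct $x,y$ are adjacent iff $x+y\in T$. A subset $C$ of the vertex set of a graph is a perfect code if every vertex is at distance at most one from exactly one vertex of $C$. A subgroup $H$ of $A$ is a subgroup perfect code of $A$ if $H$ is a perfect code of $\mathrm{CayS}(A,T)$ for some square-free $T\subseteq A$ (the empty set allowed). *)

(* Defs.v *)
From mathcomp Require Import all_boot all_algebra all_fingroup.
Set Implicit Arguments. Unset Strict Implicit. Unset Printing Implicit Defensive.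
Import GRing.Theory.
Local Open Scope ring_scope.

(* A finite abelian group A, written additively, is a finZmodType V;
   its subgroups are the {group V} (the additive finGroupType of V). *)

Definition is_square (V : finZmodType) (x : V) : bool :=
  [exists y : V, x == y + y].

Definition square_free (V : finZmodType) (T : {set V}) : bool :=
  [forall x in T, ~~ is_square x].

Definition cays_adj (V : finZmodType) (T : {set V}) (x y : V) : bool :=
  (x != y) && (x + y \in T).

(* C is a perfect code of Cay S(V,T): every vertex v is at distance
   at most one (i.e. equal or adjacent) from exactly one vertex of C *)
Definition perfect_code (V : finZmodType) (T : {set V}) (C : {set V}) : Prop :=
  forall v : V, #|[set c in C | (c == v) || cays_adj T v c]| = 1%N.

Definition subgroup_perfect_code (V : finZmodType) (H : {group V}) : Prop :=
  exists T : {set V}, square_free T /\ perfect_code T H.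

(* Main.v *)
Require Import Defs.
From mathcomp Require Import all_boot all_algebra all_fingroup.
Set Implicit Arguments. Unset Strict Implicit. Unset Printing Implicit Defensive.
Import GRing.Theory.
Local Open Scope ring_scope.

Lemma addH (V : finZmodType) (H : {group V}) x y : x \in H -> y \in H -> x + y \in H.
Proof. exact: groupM. Qed.
Lemma oppH (V : finZmodType) (H : {group V}) x : x \in H -> - x \in H.
Proof. exact: groupVr. Qed.

Lemma subH (V : finZmodType) (H : {group V}) x y : x \in H -> y \in H -> x - y \in H.
Proof. by move=> hx hy; apply: addH => //; apply: oppH. Qed.

Lemma zeroH (V : finZmodType) (H : {group V}) : (0 : V) \in H.
Proof. exact: group1. Qed.

Definition pr (V : finZmodType) (H : {group V}) (x : V) :=
  [pick y | (y - x \in H) && ~~ is_square y].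

Lemma pr_coset (V : finZmodType) (H : {group V}) x x' :
  x' - x \in H -> pr H x = pr H x'.
Proof.
move=> hx; apply: eq_pick => y /=.
have -> : (y - x \in H) = (y - x' \in H); last by [].
apply/idP/idP => h.
- have := subH h hx; by rewrite opprB addrA subrK.
- have := addH h hx; by rewrite addrA subrK.
Qed.

Theorem lemma3p4 (V : finZmodType) (H : {group V}) :
  ~~ odd #|V| ->
  (exists2 h : V, h \in H & ~~ is_square h) ->
  subgroup_perfect_code H.
Proof.
move=> _ [h hH hns].
pose T := [set x | (x \notin H) && (pr H x == Some x)].
exists T; split.
  apply/forallP => x; apply/implyP; rewrite inE => /andP[_ /eqP].
  rewrite /pr; case: pickP => // y /andP[_ ny] [<-]; exact: ny.
move=> v.
case vH: (v \in H).
  rewrite (_ : [set c in _ | _] = [set v]) ?cards1 //; apply/setP => c; rewrite !inE.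
  case cv: (c == v); first by rewrite (eqP cv) vH.
  rewrite /cays_adj; case cH: (c \in H) => //=.
  by rewrite !inE (addH vH cH) /= andbF.
have [r prv] : exists r, pr H v = Some r.
  rewrite /pr; case: pickP => [y _|none]; first by exists y.
  exfalso.
  case sv: (is_square v); last by have := none v; rewrite subrr zeroH sv.
  move/existsP: sv => [a /eqP va].
  have := none (v + h); rewrite addrC addKr hH /=.
  case/existsP => b /eqP vhb.
  move/negP: hns; apply; apply/existsP; exists (b - a); apply/eqP.
  have -> : h = (v + h) - v by rewrite addrAC subrr add0r.
  by rewrite vhb va opprD addrACA.
have : (r - v \in H) && ~~ is_square r.
  by move: prv; rewrite /pr; case: pickP => // y hy [<-].
case/andP=> rvH _.
have rH : r \notin H.
  by apply/negP => rH; have := subH rH rvH; rewrite opprB addrC subrK vH.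
rewrite (_ : [set c in _ | _] = [set r - v]) ?cards1 //; apply/setP => c; rewrite !inE.
case cH: (c \in H) => /=; last first.
  by apply/esym/negbTE; apply: contraFN cH => /eqP ->.
have -> : (c == v) = false by apply: contraFF vH => /eqP <-.
rewrite /cays_adj /=.
have -> : (v != c) by apply: contraFN vH => /eqP ->.
rewrite inE /=.
have pvc : pr H (v + c) = Some r.
  by rewrite -prv; apply/esym/pr_coset; rewrite addrAC subrr add0r.
rewrite pvc.
apply/idP/idP.
  case/andP=> _ /eqP [->]; by rewrite addrAC subrr add0r.
move/eqP => ->; rewrite addrC subrK rH eqxx //.
Qed.
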